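(* Let $u$ be a bounded nonnegative function on $\mathbb{N}$ and $\mathfrak{N}_u$ the 1D-GWN operator associated with $u$. Then $$\mathfrak{N}_u\Phi=\sum_{k=0}^\infty u(k)\,\mathfrak{a}_k^\dagger\mathfrak{a}_k\Phi,\qquad\Phi\in\mathcal{S}^*(M),$$ where the series converges in the strong topology of $\mathcal{S}^*(M)$.
   Context: Setting: $M$ a discrete-time normal martingale with the chaotic representation property; $Z_0=M_0$, $Z_n=M_n-M_{n-1}$; $\Gamma$ the finite subsets of $\mathbb{N}$, $Z_\emptyset=1$, $Z_\sigma=\prod_{j\in\sigma}Z_j$, an orthonormal basis of $\mathcal{L}^2(M)$. $\lambda_\emptyset=1$, $\lambda_\sigma=\prod_{k\in\sigma}(k+1)$; $\mathcal{S}(M)=\{\xi\in\mathcal{L}^2(M):\sum_\sigma\lambda_\sigma^{2p}|\langle Z_\sigma,\xi\rangle|^2<\infty\ \forall p\ge0\}$ (countably Hilbertian nuclear space), $\mathcal{S}^*(M)$ its dual with the strong topology. Fock transform $\widehat\Phi(\sigma)=\Phi(Z_\sigma)$ (determines $\Phi$); $\mathbf{1}_\sigma$ is the indicator of $\sigma$. The 1D-GWN operator $\mathfrak{N}_u$ is the unique continuous linear operator on $\mathcal{S}^*(M)$ with $\widehat{\mathfrak{N}_u\Phi}(\sigma)=\#_u(\sigma)\widehat\Phi(\sigma)$, $\#_u(\sigma)=\sum_k\mathbf{1}_\sigma(k)u(k)$. For $k\ge0$, $\mathfrak{a}_k,\mathfrak{a}_k^\dagger$ are the continuous linear operators on $\mathcal{S}^*(M)$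 determined by $\widehat{\mathfrak{a}_k\Phi}(\sigma)=(1-\mathbf{1}_\sigma(k))\widehat\Phi(\sigma\cup\{k\})$ and $\widehat{\mathfrak{a}_k^\dagger\Phi}(\sigma)=\mathbf{1}_\sigma(k)\widehat\Phi(\sigma\setminus\{k\})$. *)

(* Defs.v *)
From HB Require Import structures.
From mathcomp Require Import all_boot all_order all_algebra.
From mathcomp Require Import reals.
From mathcomp Require Import complex finmap.

Set Implicit Arguments.
Unset Strict Implicit.
Unset Printing Implicit Defensive.

Import Order.TTheory GRing.Theory Num.Theory.
Local Open Scope ring_scope.
Local Open Scope complex_scope.


Notation Gamma := {fset nat}.

Definition lambda (s : Gamma) : nat := \prod_(k <- s) k.+1.

Section FockModel.
Variable R : realType.
Local Notation C := R[i].

(** An element xi of L^2(M) is represented by its coefficient family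
    sigma |-> <Z_sigma, xi> with respect to the orthonormal basis (Z_sigma).
    [wbound p xi M] : every finite partial sum of
    sum_sigma lambda_sigma^{2p} |<Z_sigma,xi>|^2 is <= M, i.e. ||xi||_p^2 <= M. *)
Definition wbound (p : nat) (xi : Gamma -> C) (M : R) : Prop :=
  forall A : {fset Gamma},
    \sum_(s <- A) ((lambda s ^ (2 * p))%:R * `|xi s| ^+ 2) <= M%:C.

Definition inS (xi : Gamma -> C) : Prop :=
  forall p : nat, exists M : R, wbound p xi M.

Definition Zb (s : Gamma) : Gamma -> C := fun t => (t == s)%:R.

(** Generalized functionals: functions on coefficient families; only their
    restriction to S(M) is relevant. *)
Definition functional := (Gamma -> C) -> C.

Definition inSdual (Phi : functional) : Prop :=
  (forall (a : C) (xi eta : Gamma -> C), inS xi -> inS eta ->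
      Phi (fun s => a * xi s + eta s) = a * Phi xi + Phi eta) /\
  exists (p : nat) (K : R), forall xi : Gamma -> C, inS xi ->
      forall M : R, wbound p xi M -> `|Phi xi| ^+ 2 <= (K * M)%:C.

Definition fock (Phi : functional) (s : Gamma) : C := Phi (Zb s).

Definition boundedS (B : (Gamma -> C) -> Prop) : Prop :=
  (forall xi, B xi -> inS xi) /\
  forall p : nat, exists M : R, forall xi, B xi -> wbound p xi M.

Definition strong_cvg (Ps : nat -> functional) (P : functional) : Prop :=
  forall B : (Gamma -> C) -> Prop, boundedS B ->
  forall eps : R, 0 < eps -> exists N : nat, forall n : nat, (N <= n)%N ->
  forall xi, B xi -> `|Ps n xi - P xi| <= eps%:C.

Definition count_u (u : nat -> R) (s : Gamma) : R := \sum_(k <- s) u k.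

Definition is_GWN_op (u : nat -> R) (N : functional -> functional) : Prop :=
  forall Phi, inSdual Phi ->
    inSdual (N Phi) /\ forall s, fock (N Phi) s = (count_u u s)%:C * fock Phi s.

Definition is_annihilators (a : nat -> functional -> functional) : Prop :=
  forall k Phi, inSdual Phi ->
    inSdual (a k Phi) /\
    forall s, fock (a k Phi) s = (1 - (k \in s)%:R) * fock Phi (s `|` [fset k])%fset.

Definition is_creators (ad : nat -> functional -> functional) : Prop :=
  forall k Phi, inSdual Phi ->
    inSdual (ad k Phi) /\
    forall s, fock (ad k Phi) s = (k \in s)%:R * fock Phi (s `\ k)%fset.

End FockModel.

(* Main.v *)
Require Import Defs.
From HB Require Import structures.
From mathcomp Require Import all_boot all_order all_algebra.
From mathcomp Require Import reals.
From mathcomp Require Import complex finmap.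
From mathcomp Require Import classical_sets boolp.
From mathcomp Require Import ring lra zify.
Import Order.TTheory GRing.Theory Num.Theory.
Local Open Scope ring_scope.
Local Open Scope complex_scope.

Set Implicit Arguments.
Unset Strict Implicit.
Unset Printing Implicit Defensive.

Section Aux.
Variable R : realType.
Local Notation C := R[i].

Definition nr (z : C) : R := complex.Re `|z|.

Lemma normE (z : C) : `|z| = (nr z)%:C.
Proof. by rewrite /nr (RRe_real (x:=`|z|)) // normr_real. Qed.

Lemma nr_ge0 z : 0 <= nr z.
Proof. by rewrite -ler0c -normE. Qed.

Lemma nrM x y : nr (x * y) = nr x * nr y.
Proof. by apply: complexI; rewrite rmorphM /= -!normE normrM. Qed.

Lemma nrD x y : nr (x + y) <= nr x + nr y.
Proof. by rewrite -lecR rmorphD /= -!normE ler_normD. Qed.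

Lemma nrN x : nr (- x) = nr x.
Proof. by rewrite /nr normrN. Qed.



Definition wr (p : nat) (g : Gamma -> C) (s : Gamma) : R :=
  (lambda s ^ (2 * p))%:R * nr (g s) ^+ 2.

Lemma sumC p g (A : seq Gamma) :
  \sum_(s <- A) ((lambda s ^ (2 * p))%:R * `|g s| ^+ 2) = (\sum_(s <- A) wr p g s)%:C.
Proof.
rewrite rmorph_sum /=; apply: eq_bigr => s _.
rewrite /wr rmorphM rmorphXn /= rmorph_nat normE; congr (_ * _); first by rewrite natrX. by rewrite -rmorphXn.
Qed.

Lemma wboundE p g M : wbound p g M <-> forall A : {fset Gamma}, \sum_(s <- A) wr p g s <= M.
Proof.
by rewrite /wbound; split => H A; move: (H A); rewrite sumC lecR.
Qed.

Lemma le_of_eq (x y : R) : x = y -> x <= y.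
Proof. by move=> ->. Qed.

Lemma nr0 : nr 0 = 0.
Proof. by apply: complexI; rewrite -normE normr0. Qed.

Lemma wr_ge0 p g s : 0 <= wr p g s.
Proof. by rewrite /wr mulr_ge0 // exprn_ge0 // nr_ge0. Qed.

Lemma lambda_gt0 s : (0 < lambda s)%N.
Proof. by rewrite /lambda; elim/big_ind: _ => // x y; rewrite muln_gt0 => -> ->. Qed.

Lemma wr_mono p q g s : (p <= q)%N -> wr p g s <= wr q g s.
Proof.
move=> pq; rewrite /wr ler_wpM2r ?exprn_ge0 ?nr_ge0 // ler_nat.
by rewrite leq_pexp2l ?lambda_gt0 // leq_mul2l pq orbT.
Qed.

Lemma wbound_ge0 p (g : Gamma -> C) M : wbound p g M -> 0 <= M.
Proof. by move/wboundE => /(_ fset0); rewrite big_nil. Qed.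

Lemma wbound_mono p q (g : Gamma -> C) M : (p <= q)%N -> wbound q g M -> wbound p g M.
Proof.
move=> pq /wboundE H; apply/wboundE => A; apply: le_trans (H A).
by apply: ler_sum => s _; apply: wr_mono.
Qed.

Lemma wbound_dom p (g : Gamma -> C) q1 h1 q2 h2 (c1 c2 M1 M2 : R) :
  (forall s, wr p g s <= c1 * wr q1 h1 s + c2 * wr q2 h2 s) -> 0 <= c1 -> 0 <= c2 ->
  wbound q1 h1 M1 -> wbound q2 h2 M2 -> wbound p g (c1 * M1 + c2 * M2).
Proof.
move=> H c10 c20 /wboundE H1 /wboundE H2; apply/wboundE => A.
apply: le_trans (ler_sum _ (fun s _ => H s)) _.
rewrite big_split /= -!mulr_sumr.
by apply: lerD; apply: ler_wpM2l.
Qed.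

Lemma wbound_dom1 p (g : Gamma -> C) q h (c M : R) :
  (forall s, wr p g s <= c * wr q h s) -> 0 <= c ->
  wbound q h M -> wbound p g (c * M).
Proof.
move=> H c0 hM; have := @wbound_dom p g q h q h c 0 M M.
rewrite mul0r addr0; apply => //; move=> s; rewrite mul0r addr0; exact: H.
Qed.

Lemma inS_sub (g h : Gamma -> C) : (forall s, nr (g s) <= nr (h s)) -> inS h -> inS g.
Proof.
move=> H hS p; have [M hM] := hS p; exists (1 * M).
apply: wbound_dom1 hM => // s; rewrite mul1r /wr ler_wpM2l //.
by rewrite lerXn2r ?nnegrE ?nr_ge0.
Qed.

Lemma nr_lin_sq (a x y : C) : nr (a * x + y) ^+ 2 <= 2 * nr a ^+ 2 * nr x ^+ 2 + 2 * nr y ^+ 2.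
Proof.
have h1 := nrD (a * x) y; rewrite nrM in h1.
have h0 := nr_ge0 (a * x + y).
have ha := nr_ge0 a; have hx := nr_ge0 x; have hy := nr_ge0 y.
set A := nr a in h1 ha *; set X := nr x in h1 hx *; set Y := nr y in h1 hy *.
set Z := nr (a * x + y) in h0 h1 *.
have h2 : Z ^+ 2 <= (A * X + Y) ^+ 2.
  by rewrite lerXn2r // nnegrE ?addr_ge0 ?mulr_ge0.
have h3 : 0 <= (A * X - Y) ^+ 2 by apply: sqr_ge0.
apply: le_trans h2 _; rewrite -(subr_ge0); apply: le_trans h3 _.
by apply: le_of_eq; ring.
Qed.

Lemma inS_lin (a : C) (x y : Gamma -> C) : inS x -> inS y -> inS (fun s => a * x s + y s).
Proof.
move=> xS yS p; have [M1 h1] := xS p; have [M2 h2] := yS p.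
exists (2 * nr a ^+ 2 * M1 + 2 * M2).
apply: wbound_dom h1 h2; rewrite ?mulr_ge0 ?exprn_ge0 ?nr_ge0 //.
move=> s; rewrite /wr.
set L := (lambda s ^ (2 * p))%:R.
have L0 : 0 <= L by rewrite ler0n.
have := nr_lin_sq a (x s) (y s) => H.
apply: le_trans (ler_wpM2l L0 H) _.
by apply: le_of_eq; ring.
Qed.


Lemma nr1 : nr 1 = 1.
Proof. by apply: complexI; rewrite -normE normr1. Qed.

Lemma wr_Zb p t s : wr p (Zb R t) s = if s == t then (lambda t ^ (2 * p))%:R else 0.
Proof.
rewrite /wr /Zb; case: eqP => [->|_]; first by rewrite nr1 expr1n mulr1.
by rewrite nr0 expr0n /= mulr0.
Qed.

Lemma inS_Zb t : inS (Zb R t).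
Proof.
move=> p; exists (lambda t ^ (2 * p))%:R; apply/wboundE => A.
case: (boolP (t \in (A : seq Gamma))) => tA.
  rewrite (bigD1_seq t) //= ?fset_uniq // wr_Zb eqxx big1 ?addr0 // => s /negbTE st.
  by rewrite wr_Zb st.
rewrite big1_seq ?ler0n // => s /= sA; rewrite wr_Zb; case: eqP => // st.
by move: tA; rewrite -st sA.
Qed.

Lemma inS0 : inS (fun _ : Gamma => (0 : C)).
Proof. apply: (@inS_sub _ (Zb R fset0)); last exact: inS_Zb. by move=> s; rewrite nr0 nr_ge0. Qed.


Definition lin (P : functional R) := forall (a : C) (xi eta : Gamma -> C), inS xi -> inS eta ->
      P (fun s => a * xi s + eta s) = a * P xi + P eta.

Definition contR (P : functional R) (p : nat) (K : R) :=
  0 <= K /\ forall xi : Gamma -> C, inS xi -> forall M : R, wbound p xi M -> nr (P xi) ^+ 2 <= K * M.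

Lemma sqC (z : C) r : (`|z| ^+ 2 <= r%:C) = (nr z ^+ 2 <= r).
Proof. by rewrite normE -rmorphXn lecR. Qed.

Lemma inSdualP (P : functional R) : inSdual P <-> lin P /\ exists p K, contR P p K.
Proof.
split.
  case=> L [p [K H]]; split => //; exists p, `|K|; split => // xi xS M hM.
  have M0 := wbound_ge0 hM.
  by rewrite -sqC; apply: le_trans (H xi xS M hM) _; rewrite lecR ler_wpM2r // ler_norm.
case=> L [p [K [K0 H]]]; split => //; exists p, K => xi xS M hM.
by rewrite sqC; apply: H.
Qed.

Lemma inSdual_ext (P Q : functional R) : (forall xi, P xi = Q xi) -> inSdual P -> inSdual Q.
Proof.
move=> e [L [p [K H]]]; split.
  by move=> a xi eta xS eS; rewrite -!e; apply: L.
by exists p, K => xi xS M hM; rewrite -e; apply: H.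
Qed.

Lemma inSdual0 : inSdual (fun _ : Gamma -> C => (0 : C)).
Proof.
apply/inSdualP; split; first by move=> *; rewrite mulr0 addr0.
exists 0%N, 0; split => // xi _ M _; by rewrite nr0 expr0n /= mul0r.
Qed.

Lemma contR_mono (P : functional R) p q K : (p <= q)%N -> contR P p K -> contR P q K.
Proof.
move=> pq [K0 H]; split => // xi xS M hM; apply: H => //.
exact: wbound_mono hM.
Qed.

Lemma inSdual_comb (P Q : functional R) (c : C) : inSdual P -> inSdual Q ->
  inSdual (fun xi => P xi + c * Q xi).
Proof.
move=> /inSdualP [LP [p1 [K1 H1]]] /inSdualP [LQ [p2 [K2 H2]]].
apply/inSdualP; split.
  by move=> a xi eta xS eS; rewrite LP // LQ //; ring.
have [K10 H1'] := contR_mono (leq_maxl p1 p2) H1.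
have [K20 H2'] := contR_mono (leq_maxr p1 p2) H2.
exists (maxn p1 p2), (2 * K1 + 2 * nr c ^+ 2 * K2); split.
  by rewrite addr_ge0 ?mulr_ge0 ?exprn_ge0 ?nr_ge0.
move=> xi xS M hM; rewrite addrC.
apply: le_trans (nr_lin_sq _ _ _) _.
have h1 := H1' xi xS M hM; have h2 := H2' xi xS M hM.
have hc : 0 <= 2 * nr c ^+ 2 by rewrite mulr_ge0 ?exprn_ge0 ?nr_ge0.
rewrite (mulrDl (2 * K1)) [X in _ <= X]addrC; apply: lerD.
  rewrite -(mulrA _ K2); apply: ler_wpM2l => //.
by rewrite -(mulrA 2); apply: ler_wpM2l => //.
Qed.

Lemma inSdual_sum (B : nat -> functional R) (c : nat -> C) n :
  (forall k, inSdual (B k)) -> inSdual (fun xi => \sum_(k < n) c k * B k xi).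
Proof.
move=> HB; elim: n => [|n IH].
  by apply: inSdual_ext inSdual0 => xi; rewrite big_ord0.
apply: inSdual_ext (inSdual_comb (c n) IH (HB n)) => xi.
by rewrite big_ord_recr.
Qed.

Lemma lin0 (P : functional R) : lin P -> P (fun _ => 0) = 0.
Proof.
move=> L; have := L 1 (fun _ => 0) (fun _ => 0) inS0 inS0.
have -> : (fun s : Gamma => (1 : C) * 0 + 0) = (fun _ => 0).
  by apply: boolp.funext => s; rewrite mulr0 addr0.
rewrite mul1r => /eqP; rewrite -subr_eq0 opprD addrA subrr sub0r oppr_eq0 => /eqP //.
Qed.

Lemma linZ (P : functional R) a xi : lin P -> inS xi -> P (fun s => a * xi s) = a * P xi.
Proof.
move=> L xS; have := L a xi (fun _ => 0) xS inS0.
have -> : (fun s : Gamma => a * xi s + 0) = (fun s => a * xi s).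
  by apply: boolp.funext => s; rewrite addr0.
by rewrite lin0 // addr0.
Qed.

Lemma linD (P : functional R) xi eta : lin P -> inS xi -> inS eta -> P (fun s => xi s + eta s) = P xi + P eta.
Proof.
move=> L xS eS; have := L 1 xi eta xS eS.
have -> : (fun s : Gamma => 1 * xi s + eta s) = (fun s => xi s + eta s).
  by apply: boolp.funext => s; rewrite mul1r.
by rewrite mul1r.
Qed.


Lemma sum_fsetU (f : Gamma -> R) (A B : {fset Gamma}) :
  \sum_(s <- (A `|` B)%fset) f s = \sum_(s <- A) f s + \sum_(s <- B) (if s \in A then 0 else f s).
Proof.
rewrite (perm_big (A ++ [seq s <- B | s \notin A])).
  rewrite big_cat /= big_filter; congr (_ + _); rewrite big_mkcond; apply: eq_bigr => s _.
  by case: (s \in A).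
apply: uniq_perm; first exact: fset_uniq.
  rewrite cat_uniq fset_uniq filter_uniq ?fset_uniq //= andbT.
  by apply/hasPn => s; rewrite mem_filter => /andP [].
move=> s; rewrite mem_cat mem_filter.
rewrite in_fsetU; by case: (s \in A).
Qed.

Lemma tail_small p (xi : Gamma -> C) M eps : wbound p xi M -> 0 < eps ->
  exists l : {fset Gamma}, wbound p (fun s => if s \in l then 0 else xi s) eps.
Proof.
move=> /wboundE hM e0.
pose E : set R := fun r => exists A : {fset Gamma}, r = \sum_(s <- A) wr p xi s.
have hE : has_sup E.
  split; first by exists 0, fset0; rewrite big_nil.
  by exists M => r [A ->]; apply: hM.
have [e [A0 ->] he] := sup_adherent e0 hE.
exists A0; apply/wboundE => B.
have hub := sup_upper_bound hE.
have := hub (\sum_(s <- (A0 `|` B)%fset) wr p xi s) (ex_intro _ _ erefl).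
rewrite sum_fsetU => h.
have -> : \sum_(s <- B) wr p (fun s => if s \in A0 then 0 else xi s) s =
          \sum_(s <- B) (if s \in A0 then 0 else wr p xi s).
  apply: eq_bigr => s _; rewrite /wr; case: (s \in A0) => //.
  by rewrite nr0 expr0n /= mulr0.
lra.
Qed.

Lemma lin_head (P : functional R) (xi : Gamma -> C) (l : seq Gamma) : lin P -> inS xi ->
  (forall t, P (Zb R t) = 0) -> P (fun s => if s \in l then xi s else 0) = 0.
Proof.
move=> L xS HZ; elim: l => [|t l IH].
  have -> : (fun s : Gamma => if s \in [::] then xi s else 0) = (fun _ => 0).
    by apply: boolp.funext.
  exact: lin0.
have hS : inS (fun s => if s \in l then xi s else 0).
  by apply: inS_sub xS => s; case: (s \in l); rewrite ?nr0 ?nr_ge0.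
case: (boolP (t \in l)) => tl.
  transitivity (P (fun s => if s \in l then xi s else 0)); last exact: IH.
  congr P; apply: boolp.funext => s; rewrite inE.
  by case: eqP => // ->; rewrite tl.
have -> : (fun s => if s \in t :: l then xi s else 0) =
          (fun s => xi t * Zb R t s + (if s \in l then xi s else 0)).
  apply: boolp.funext => s; rewrite inE /Zb.
  case: eqP => [->|_]; first by rewrite (negbTE tl) mulr1 addr0.
  by rewrite mulr0 add0r.
rewrite (L (xi t) (Zb R t)) ?inS_Zb //. have -> : P (Zb R t) = 0 := HZ t. by rewrite IH mulr0 addr0.
exact: inS_Zb.
Qed.

Lemma small_le0 (x K : R) : 0 <= K -> (forall e, 0 < e -> x <= K * e) -> x <= 0.
Proof.
move=> K0 H; case: (lerP x 0) => // x0.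
have K1 : 0 < K + 1 by lra.
have := H (x / (K + 1)) (divr_gt0 x0 K1).
rewrite mulrA ler_pdivlMr // => h.
have : x * K + x <= K * x by rewrite -{2}(mulr1 x) -mulrDr.
lra.
Qed.

Lemma uniq_zero (P : functional R) p K : lin P -> contR P p K ->
  (forall t, P (Zb R t) = 0) -> forall xi, inS xi -> P xi = 0.
Proof.
move=> L [K0 HC] HZ xi xS.
suff : nr (P xi) ^+ 2 <= 0.
  move=> h; have h0 : nr (P xi) = 0.
    apply/eqP; rewrite -sqrf_eq0 eq_le h /=; exact: sqr_ge0.
  by apply/normr0_eq0; rewrite normE h0.
apply: (small_le0 K0) => e e0.
have [M hM] := xS p.
have [l hl] := tail_small hM e0.
have hT : inS (fun s => if s \in l then 0 else xi s).
  by apply: inS_sub xS => s; case: (s \in l); rewrite ?nr0 ?nr_ge0.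
have hH : inS (fun s => if s \in (l : seq Gamma) then xi s else 0).
  by apply: inS_sub xS => s; case: (s \in (l : seq Gamma)); rewrite ?nr0 ?nr_ge0.
have -> : xi = (fun s => (if s \in l then 0 else xi s) + (if s \in (l : seq Gamma) then xi s else 0)).
  apply: boolp.funext => s; have -> : (s \in (l : seq Gamma)) = (s \in l) by [].
  by case: (s \in l); rewrite ?add0r ?addr0.
rewrite linD // lin_head // addr0.
exact: HC hl.
Qed.


Lemma size_prod (l : seq nat) : uniq l ->
  (size l <= \prod_(k <- l) k.+1)%N /\ (0%N \notin l -> (size l < \prod_(k <- l) k.+1)%N).
Proof.
elim: l => [|k l IH] /=; first by rewrite big_nil.
case/andP => kl ul; have [h1 h2] := IH ul.
have P0 : (0 < \prod_(j <- l) j.+1)%N by elim/big_ind: _ => // x y; rewrite muln_gt0 => -> ->.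
rewrite big_cons inE.
set P := \prod_(j <- l) j.+1 in h1 h2 P0 *.
case: (posnP k) => [k0|kp].
  subst k; have h3 := h2 kl; rewrite eqxx /=; split => //; lia.
have -> : (0 == k) = false by apply/eqP => e; rewrite -e in kp.
split; first by nia.
by move=> /= /h2 h3; nia.
Qed.

Lemma size_lambda (s : Gamma) : (size s <= lambda s)%N.
Proof. by have [] := size_prod (fset_uniq s). Qed.

Lemma lambda_ge k (s : Gamma) : k \in s -> (k.+1 <= lambda s)%N.
Proof.
move=> ks; rewrite /lambda (bigD1_seq k) ?fset_uniq //=.
apply: leq_pmulr; elim/big_ind: _ => // x y; rewrite muln_gt0 => -> ->. by [].
Qed.


Definition cn (u : nat -> R) n (s : Gamma) : R := \sum_(k <- s | (n < k)%N) u k.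

Lemma cn_split (u : nat -> R) n s : count_u u s = \sum_(k < n.+1) u k * ((k : nat) \in s)%:R + cn u n s.
Proof.
rewrite /count_u /cn (bigID (fun k => (n < k)%N)) /= addrC; congr (_ + _).
rewrite -(big_mkord xpredT (fun k => u k * (k \in s)%:R)).
have -> : \sum_(0 <= i < n.+1) u i * (i \in s)%:R = \sum_(i <- iota 0 n.+1 | i \in s) u i.
  rewrite [RHS]big_mkcond; apply: eq_bigr => k _; case: (k \in s); rewrite ?mulr1 ?mulr0 //.
rewrite -big_filter -[in RHS]big_filter; apply: perm_big; apply: uniq_perm.
- by rewrite filter_uniq ?fset_uniq.
- by rewrite filter_uniq ?iota_uniq.
move=> k; rewrite !mem_filter mem_iota add0n ltnS leqNgt /=.
by rewrite negbK ltnS andbC.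
Qed.

Section CN.
Variables (u : nat -> R) (Ku : R).
Hypothesis u0 : forall k, 0 <= u k.
Hypothesis uK : forall k, u k <= Ku.

Lemma Ku0 : 0 <= Ku. Proof. exact: le_trans (u0 0) (uK 0). Qed.

Lemma cn_ge0 n s : 0 <= cn u n s.
Proof. by apply: sumr_ge0 => k _. Qed.

Lemma cn_size n s : cn u n s <= Ku * (size s)%:R.
Proof.
rewrite /cn; elim: (s : seq nat) => [|k l IH]; first by rewrite big_nil mulr0.
rewrite big_cons /= -(addn1 (size l)) natrD mulrDr mulr1.
case: (n < k)%N.
  by rewrite addrC lerD.
by apply: le_trans IH _; rewrite lerDl Ku0.
Qed.

Lemma cn_lam n s : cn u n s <= Ku * (lambda s)%:R.
Proof.
apply: le_trans (cn_size n s) _; apply: ler_wpM2l; first exact: Ku0.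
by rewrite ler_nat size_lambda.
Qed.

Lemma cn_bound n s : cn u n s * (n.+2)%:R <= Ku * (lambda s)%:R ^+ 2.
Proof.
case: (boolP (has (fun k => (n < k)%N) s)) => [/hasP [k ks nk]|hn].
  have h1 := lambda_ge ks.
  have h2 : (n.+2)%:R <= (lambda s)%:R :> R by rewrite ler_nat; apply: leq_trans h1.
  rewrite expr2 mulrA; apply: ler_pM => //; first exact: cn_ge0.
  exact: cn_lam.
have -> : cn u n s = 0.
  rewrite /cn big1_seq // => k /andP [nk ks]; move/hasPn: hn => /(_ k ks).
  by rewrite nk.
by rewrite mul0r mulr_ge0 ?Ku0 ?exprn_ge0.
Qed.

Lemma nrR (r : R) : nr r%:C = `|r|.
Proof. by rewrite /nr normc_def /= expr0n /= addr0 sqrtr_sqr. Qed.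

Lemma wr_cn p n (xi : Gamma -> C) s :
  wr p (fun s => (cn u n s)%:C * xi s) s = (lambda s ^ (2 * p))%:R * cn u n s ^+ 2 * nr (xi s) ^+ 2.
Proof. by rewrite /wr nrM nrR ger0_norm ?cn_ge0 // exprMn mulrA. Qed.

Lemma lam_pow p s k : (lambda s ^ (2 * (p + k)))%:R = (lambda s ^ (2 * p))%:R * (lambda s)%:R ^+ (2 * k) :> R.
Proof. by rewrite -natrX -natrM -expnD -mulnDr. Qed.

Lemma wr_cn1 p n xi s :
  wr p (fun s => (cn u n s)%:C * xi s) s <= Ku ^+ 2 * wr (p + 1) xi s.
Proof.
rewrite wr_cn /wr lam_pow muln1.
have hL : 0 <= (lambda s ^ (2 * p))%:R :> R by rewrite ler0n.
have hX : 0 <= nr (xi s) ^+ 2 by rewrite exprn_ge0 ?nr_ge0.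
have h1 := cn_lam n s; have h0 := cn_ge0 n s.
have h2 : cn u n s ^+ 2 <= (Ku * (lambda s)%:R) ^+ 2.
  by rewrite lerXn2r // nnegrE // mulr_ge0 ?Ku0 ?ler0n.
apply: (le_trans (ler_wpM2r hX (ler_wpM2l hL h2))).
by apply: le_of_eq; ring.
Qed.

Lemma wr_cn2 p n xi s :
  wr p (fun s => (cn u n s)%:C * xi s) s <= (Ku ^+ 2 / (n.+2)%:R ^+ 2) * wr (p + 2) xi s.
Proof.
rewrite wr_cn /wr lam_pow.
have hL : 0 <= (lambda s ^ (2 * p))%:R :> R by rewrite ler0n.
have hX : 0 <= nr (xi s) ^+ 2 by rewrite exprn_ge0 ?nr_ge0.
have hN : 0 < (n.+2)%:R :> R by rewrite ltr0n.
have h1 := cn_bound n s; have h0 := cn_ge0 n s.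
have h2 : (cn u n s * (n.+2)%:R) ^+ 2 <= (Ku * (lambda s)%:R ^+ 2) ^+ 2.
  by rewrite lerXn2r // nnegrE ?mulr_ge0 ?Ku0 ?exprn_ge0 ?ler0n // ltW.
have h3 : cn u n s ^+ 2 <= (Ku * (lambda s)%:R ^+ 2) ^+ 2 / (n.+2)%:R ^+ 2.
  by rewrite ler_pdivlMr ?exprn_gt0 // -exprMn.
apply: (le_trans (ler_wpM2r hX (ler_wpM2l hL h3))).
apply: le_of_eq; rewrite !mulrA; field.
have hn : 0 <= n%:R :> R by rewrite ler0n. by apply/eqP; lra.
Qed.

End CN.

End Aux.

Unset Implicit Arguments.

Lemma final_ineq (R : realType) (A e m : R) : 0 <= A -> 0 < e -> 1 <= m ->
  A / e ^+ 2 < m -> A / m ^+ 2 <= e ^+ 2.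
Proof.
move=> A0 e0 m1 hX.
have m0 : 0 < m ^+ 2 by rewrite exprn_gt0 // (lt_le_trans ltr01).
have e2 : 0 < e ^+ 2 by rewrite exprn_gt0.
rewrite ler_pdivrMr //.
move: hX; rewrite ltr_pdivrMr // => hX.
nra.
Qed.

Theorem theorem3p9 (R : realType) (u : nat -> R)
  (u_ge0 : forall k, 0 <= u k) (u_bdd : exists K : R, forall k, u k <= K)
  (Nu : functional R -> functional R) (a ad : nat -> functional R -> functional R) :
  is_GWN_op u Nu -> is_annihilators a -> is_creators ad ->
  forall Phi : functional R, inSdual Phi ->
  strong_cvg
    (fun n => fun xi => \sum_(k < n.+1) (u k)%:C * ad k (a k Phi) xi)
    (Nu Phi).
Proof.
move=> HN Ha Had Phi PhiD.
have [Ku uK] := u_bdd.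
have Ku0 : 0 <= Ku := Ku0 u_ge0 uK.
have [NPD NPf] := HN Phi PhiD.
have HB : forall k, inSdual (ad k (a k Phi)) /\
    forall s, fock (ad k (a k Phi)) s = (k \in s)%:R * fock Phi s.
  move=> k; have [aD af] := Ha k Phi PhiD; have [bD bf] := Had k _ aD.
  split => // s; rewrite bf af.
  case ks: (k \in s); last by rewrite !mul0r.
  rewrite in_fsetD1 eqxx /= subr0 !mul1r.
  by rewrite fsetUC fsetD1K.
have PsiD : forall n, inSdual (fun xi => \sum_(k < n.+1) (u k)%:C * ad k (a k Phi) xi).
  move=> n; exact: (@inSdual_sum R (fun k => ad k (a k Phi)) (fun k => (u k)%:C) n.+1 (fun k => (HB k).1)).
have /inSdualP [LPhi [p [K [K0 HPhi]]]] := PhiD.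
have inS_cn : forall n xi, inS xi -> inS (fun s => (cn u n s)%:C * xi s).
  move=> n xi xS q; have [M hM] := xS (q + 1)%N; exists (Ku ^+ 2 * M).
  apply: wbound_dom1 hM; last by rewrite exprn_ge0.
  by move=> s; apply: wr_cn1.
move=> B [BS Bb] eps eps0.
have [MB hMB] := Bb (p + 2)%N.
have hMB' : forall xi, B xi -> wbound (p + 2) xi `|MB|.
  move=> xi /hMB /wboundE h; apply/wboundE => A; apply: le_trans (h A) _.
  exact: ler_norm.
have MB0 : 0 <= `|MB| := normr_ge0 MB.
move: hMB MB0 hMB' => _; set MB' := `|MB|; move=> MB0 hMB.
pose X := K * Ku ^+ 2 * MB' / eps ^+ 2.
have X0 : 0 <= X by rewrite /X !mulr_ge0 ?invr_ge0 ?exprn_ge0 // ltW.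
exists (Num.bound X) => n Nn xi Bxi.
have xS := BS xi Bxi.
pose Psi := fun xi => \sum_(k < n.+1) (u k)%:C * ad k (a k Phi) xi.
pose D := fun xi => Nu Phi xi + (-1) * Psi xi.
have DD : inSdual D := inSdual_comb (-1) NPD (PsiD n).
pose G := fun xi => Phi (fun s => (cn u n s)%:C * xi s).
have GD : inSdual G.
  apply/inSdualP; split.
    move=> c x y xS' yS'; rewrite /G.
    have -> : (fun s => (cn u n s)%:C * (c * x s + y s)) =
              (fun s => c * ((cn u n s)%:C * x s) + (cn u n s)%:C * y s).
      by apply: boolp.funext => s; ring.
    by rewrite LPhi //; apply: inS_cn.
  exists (p + 1)%N, (K * Ku ^+ 2); split; first by rewrite mulr_ge0 // exprn_ge0.
  move=> x xS' M hM; rewrite -mulrA; apply: HPhi; first exact: inS_cn.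
  apply: wbound_dom1 hM; [move=> s; exact: wr_cn1 | exact: exprn_ge0].
have DG : forall x, inS x -> D x = G x.
  have ED := inSdual_comb (-1) DD GD.
  have /inSdualP [LE [pE [KE HE]]] := ED.
  move=> x xS'; apply/eqP; rewrite -subr_eq0; apply/eqP.
  have -> : D x - G x = D x + (-1) * G x by rewrite mulN1r.
  apply: (uniq_zero LE HE) => // t.
  have hN := NPf t; have hb k := (HB k).2 t.
  rewrite /fock in hN hb.
  rewrite /D /G /Psi hN.
  under eq_bigr do rewrite hb.
  have -> : (fun s => (cn u n s)%:C * Zb R t s) = (fun s => (cn u n t)%:C * Zb R t s).
    by apply: boolp.funext => s; rewrite /Zb; case: eqP => [->|]; rewrite ?mulr0.
  rewrite linZ //; last exact: inS_Zb.
  rewrite (cn_split u n t) rmorphD rmorph_sum /=.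
  have -> : \sum_(i < n.+1) (u i)%:C * (((i : nat) \in t)%:R * Phi (Zb R t)) =
            (\sum_(i < n.+1) (u i * ((i : nat) \in t)%:R)%:C) * Phi (Zb R t).
    rewrite big_distrl /=; apply: eq_bigr => i _.
    by rewrite rmorphM /= rmorph_nat mulrA.
  ring.
have e1 : \sum_(k < n.+1) (u k)%:C * ad k (a k Phi) xi - Nu Phi xi = - D xi.
  by rewrite /D /Psi; ring.
rewrite e1 normrN DG // normE lecR.
have hG : nr (G xi) ^+ 2 <= K * (Ku ^+ 2 / (n.+2)%:R ^+ 2 * MB').
  apply: HPhi; first exact: inS_cn.
  apply: wbound_dom1 (hMB xi Bxi); first by move=> s; exact: wr_cn2.
  by rewrite divr_ge0 ?exprn_ge0.
have hb : K * (Ku ^+ 2 / (n.+2)%:R ^+ 2 * MB') <= eps ^+ 2.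
  have -> : K * (Ku ^+ 2 / (n.+2)%:R ^+ 2 * MB') = K * Ku ^+ 2 * MB' / (n.+2)%:R ^+ 2.
    by rewrite !mulrA mulrAC.
  apply: final_ineq => //.
  - by rewrite !mulr_ge0 ?exprn_ge0.
  - by rewrite ler1n.
  apply: (lt_le_trans (archi_boundP X0)); rewrite ler_nat.
  by apply: leq_trans Nn _; apply: leqW; apply: leqW.
have x0 := nr_ge0 (G xi).
have hx : nr (G xi) ^+ 2 <= eps ^+ 2 := le_trans hG hb.
move: hx x0 eps0; clear; set y := nr (G xi); move=> hx x0 eps0.
nra.
Qed.
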